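(* Let $s,t$ be real numbers. For every integer $n \geq 3$, $$\det W_n = \Big\lfloor \frac{n-1}{2}\Big\rfloor (-s)^{n-3}t^3 - s\det W_{n-1}.$$
   Context: All matrices below are $n\times n$ upper Hessenberg with subdiagonal entries $a_{i+1,i}=s$ and $a_{ij}=0$ for $i>j+1$; only the entries $a_{ij}$ with $i\le j$ are specified. For $n = 2k+1$ ($k\ge 1$), $W_n$ has: $a_{1j}=t$ for $1\le j\le k$, $a_{1j}=0$ for $k+1\le j\le 2k$, $a_{1n}=t$; for $2\le i\le k+1$: $a_{ij}=0$ for $i\le j\le k$, $a_{ij}=t$ for $k+1\le j\le 2k$, $a_{in}=0$; for $k+2\le i\le n$: $a_{ij}=0$ for $i\le j\le 2k$, $a_{in}=t$. For $n=2k+2$ ($k\ge 0$), $W_n$ has: $a_{1j}=t$ for $1\le j\le k$, $a_{1j}=0$ for $k+1\le j\le 2k+1$, $a_{1n}=t$; for $2\le i\le k+1$: $a_{ij}=0$ for $i\le j\le k$, $a_{ij}=t$ for $k+1\le j\le 2k+1$, $a_{in}=0$; for $k+2\le i\le n$: $a_{ij}=0$ for $i\le j\le 2k+1$, $a_{in}=t$. *)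

(* Defs.v *)
From mathcomp Require Import all_boot all_order all_algebra.
From mathcomp Require Import reals.
Set Implicit Arguments. Unset Strict Implicit. Unset Printing Implicit Defensive.
Import Order.TTheory GRing.Theory Num.Theory.
Local Open Scope ring_scope.

(* Entry a_{ij} of W_n, with 1-based indices i, j in {1..n}.
   k = floor((n-1)/2): for n = 2k+1 and for n = 2k+2 alike. *)
Definition W_entry (R : ringType) (s t : R) (n i j : nat) : R :=
  let k := (n.-1)./2 in
  if (j.+1 < i)%N then 0
  else if i == j.+1 then s
  else
    if i == 1%N then (if (j <= k)%N then t else if j == n then t else 0)
    else if (i <= k.+1)%N then
      (if j == n then 0 else if (j <= k)%N then 0 else t)
    else (if j == n then t else 0).

Definition W (R : ringType) (s t : R) (n : nat) : 'M[R]_n :=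
  \matrix_(i < n, j < n) W_entry s t n i.+1 j.+1.

(* Main.v *)
Require Import Defs.
From mathcomp Require Import all_boot all_order all_algebra.
From mathcomp Require Import reals ring zify.
Import Order.TTheory GRing.Theory Num.Theory.
Local Open Scope ring_scope.

Section Hess.
Variable (R : comRingType) (g : nat -> nat -> R) (s : R).
Hypothesis Hz : forall i j, (j.+1 < i)%N -> g i j = 0.
Hypothesis Hs : forall j, g j.+1 j = s.

Definition Hm m : 'M[R]_m := \matrix_(i < m, j < m) g i j.

Lemma minor_det a m : (a <= m)%N ->
  \det (\matrix_(p < m, q < m) g (bump a p) q) = s ^+ (m - a) * \det (Hm a).
Proof.
elim: m => [|m IH] le_am.
  have -> : a = 0%N by lia.
  by rewrite !det_mx00 expr0 mul1r.
have [->|ne] := eqVneq a m.+1.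
  rewrite subnn expr0 mul1r; congr (\det _); apply/matrixP => i j.
  by rewrite !mxE /bump leqNgt ltn_ord add0n.
have le' : (a <= m)%N by lia.
rewrite (expand_det_row _ ord_max) big_ord_recr /= big1; last first.
  move=> i _; rewrite mxE Hz ?mul0r //.
  rewrite /bump /=; have := ltn_ord i; lia.
rewrite add0r mxE /cofactor /bump /= le' add1n Hs.
rewrite -signr_odd addnn odd_double expr0 mul1r.
have -> : row' ord_max (col' ord_max (\matrix_(p < m.+1, q < m.+1) g (bump a p) q))
   = \matrix_(p < m, q < m) g (bump a p) q.
  apply/matrixP => i j; rewrite !mxE /=.
  have hi : (i < m)%N := ltn_ord i. have hj : (j < m)%N := ltn_ord j.
  by rewrite [bump m i]/bump [bump m j]/bump leqNgt hi leqNgt hj.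
by rewrite IH // subSn // exprS mulrA.
Qed.

Lemma hess_det m : \det (Hm m.+1) =
  \sum_(a < m.+1) (-s) ^+ (m - a) * g a m * \det (Hm a).
Proof.
rewrite (expand_det_col _ ord_max); apply: eq_bigr => a _.
rewrite mxE /cofactor.
have -> : row' a (col' ord_max (Hm m.+1)) = \matrix_(p < m, q < m) g (bump a p) q.
  apply/matrixP => i j; rewrite !mxE /=.
  have hj : (j < m)%N := ltn_ord j.
  by rewrite [bump m j]/bump leqNgt hj.
have le : (a <= m)%N by have := ltn_ord a; lia.
have -> : (-1) ^+ (a + @ord_max m) = (-1) ^+ (m - a) :> R.
  by rewrite -signr_odd -[in RHS]signr_odd oddD oddB // addbC.
rewrite [(- s) ^+ _]exprNn minor_det //= .
set e := (-1) ^+ _; set f := s ^+ _; set D := \det _; set G := g a m.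
ring.
Qed.
End Hess.

Section WS.
Variable (R : comRingType) (s t : R) (n : nat).
Hypothesis n1 : (1 <= n)%N.
Definition g i j := W_entry s t n i.+1 j.+1.
Let k := (n.-1)./2.
Lemma hk : (k.*2 <= n.-1)%N.
Proof. have := odd_double_half n.-1; rewrite -/k; lia. Qed.

Ltac went := rewrite /g /W_entry -/k; repeat (case: ifP => ?); try done; exfalso; have := hk; lia.

Lemma gz i j : (j.+1 < i)%N -> g i j = 0.
Proof. move=> h; by rewrite /g /W_entry ltnS h. Qed.
Lemma gs j : g j.+1 j = s.
Proof. by rewrite /g /W_entry ltnn eqxx. Qed.
Lemma E0 m : (m.+1 <= k)%N -> g 0 m = t.
Proof. move=> ?; went. Qed.
Lemma E1 a m : (1 <= a)%N -> (a <= m)%N -> (m.+1 <= k)%N -> g a m = 0.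
Proof. move=> ???; went. Qed.
Lemma E2 m : (k <= m)%N -> (m.+1 < n)%N -> g 0 m = 0.
Proof. move=> ??; went. Qed.
Lemma E3 a m : (1 <= a <= k)%N -> (k <= m)%N -> (m.+1 < n)%N -> g a m = t.
Proof. move=> ???; went. Qed.
Lemma E4 a m : (k < a <= m)%N -> (m.+1 < n)%N -> g a m = 0.
Proof. move=> ??; went. Qed.
Lemma F0 : g 0 n.-1 = t.
Proof. went. Qed.
Lemma F1 a : (1 <= a <= k)%N -> g a n.-1 = 0.
Proof. move=> ?; went. Qed.
Lemma F2 a : (k < a < n)%N -> g a n.-1 = t.
Proof. move=> ?; went. Qed.

Let D m := \det (@Hm R g m).
Lemma hessW m : D m.+1 = \sum_(a < m.+1) (-s) ^+ (m - a) * g a m * D a.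
Proof. exact: (@hess_det R g s gz gs m). Qed.
Lemma D0 : D 0 = 1. Proof. exact: det_mx00. Qed.

Lemma D_small m : (1 <= m <= k)%N -> D m = (-s) ^+ m.-1 * t.
Proof.
case: m => [//|m] /andP[_ mk].
rewrite hessW big_ord_recl big1 ?addr0.
  by rewrite (@E0 m mk) D0 mulr1 subn0.
move=> i _; rewrite (@E1 (lift ord0 i) m) ?mulr0 ?mul0r //=.
Qed.

Lemma D_mid m : (k < m < n)%N -> D m = k%:R * t ^+ 2 * (-s) ^+ (m - 2).
Proof.
case: m => [|m] /andP[km mn]; first by [].
have km' : (k <= m)%N by lia.
rewrite hessW -(big_mkord xpredT (fun a => (-s) ^+ (_ - a) * g a _ * D a)) (big_cat_nat _ (n:=1)) //= big_nat1.
rewrite (@E2 m km') // mulr0 mul0r add0r.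
rewrite (big_cat_nat _ (n:=k.+1)) //=.
rewrite [X in _ + X]big_nat_cond [X in _ + X]big1 ?addr0; last first.
  move=> a /andP[h _]; move/andP: h => [h1 h2]; rewrite (@E4 a m) ?mulr0 ?mul0r //; lia.
rewrite (eq_big_nat _ _ (F2 := fun _ => t ^+ 2 * (-s) ^+ m.-1)); last first.
  move=> a /andP[h1 h2]; rewrite (@E3 a m) ?D_small //; try lia.
  have -> : m.-1 = (m - a + a.-1)%N by lia.
  rewrite exprD; ring.
rewrite sumr_const_nat subSS subn0 -mulr_natl.
have -> : (m.+1 - 2 = m.-1)%N by lia.
ring.
Qed.

Lemma D_full : D n = (-s) ^+ n.-1 * t + (k * (n.-1 - k))%:R * t ^+ 3 * (-s) ^+ (n - 3).
Proof.
have -> : D n = D n.-1.+1 by rewrite prednK.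
have hk' := hk.
rewrite hessW -(big_mkord xpredT (fun a => (-s) ^+ (_ - a) * g a _ * D a)) (big_cat_nat _ (n:=1)) //= big_nat1.
rewrite F0 D0 subn0 mulr1.
rewrite (big_cat_nat _ (n:=k.+1)) //=; last by lia.
rewrite big_nat_cond big1 ?add0r; last first.
  move=> a /andP[h _]; move/andP: h => [h1 h2]; rewrite (@F1 a) ?mulr0 ?mul0r //; lia.
rewrite (eq_big_nat _ _ (F2 := fun _ => k%:R * t ^+ 3 * (-s) ^+ (n - 3))); last first.
  move=> a /andP[h1 h2]; rewrite (@F2 a) ?D_mid; try lia.
  have [k0|kp] := posnP k.
    by rewrite k0 !mul0r mulr0.
  have -> : (n - 3 = n.-1 - a + (a - 2))%N by lia.
  rewrite exprD; ring.
rewrite sumr_const_nat subSS -mulr_natl natrM.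
ring.
Qed.
End WS.

Lemma detW (R : comRingType) (s t : R) n : (1 <= n)%N ->
  \det (W s t n) = (-s) ^+ n.-1 * t + ((n.-1)./2 * (n.-1 - (n.-1)./2))%:R * t ^+ 3 * (-s) ^+ (n - 3).
Proof. move=> n1; exact: (@D_full R s t n n1). Qed.
Lemma natid p : ((p.+3)./2 * (p.+3 - (p.+3)./2) = (p.+3)./2 + (p.+2)./2 * (p.+2 - (p.+2)./2))%N.
Proof.
have := odd_double_half p. set q := p./2. clearbody q. case: (odd p) => /= <-.
- have h1 : uphalf q.*2.+1 = q.+1 by rewrite uphalfE -doubleS doubleK.
  have h2 : (q.*2.+1)./2 = q by rewrite -add1n (half_bit_double q true).
  rewrite h1 h2; lia.
- rewrite uphalf_double doubleK; lia.
Qed.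

Theorem proposition5p4 (R : realType) (s t : R) (n : nat) :
  (3 <= n)%N ->
  \det (W s t n) =
    ((n.-1)./2)%:R * (- s) ^+ (n - 3) * t ^+ 3 - s * \det (W s t n.-1).
Proof.
case: n => [|[|[|p]]] // _.
rewrite !detW //.
case: p => [|p].
  rewrite /= (_ : (1 * (2 - 1))%N = 1%N) // (_ : (0 * (1 - 0))%N = 0%N) //.
  ring.
have -> : (p.+4 - 3 = p.+1)%N by lia.
have -> : (p.+3 - 3 = p)%N by lia.
rewrite /= natid natrD.
set u := ((p.+2)./2 * _)%:R. set v := ((p.+3)./2)%:R.
clearbody u v. rewrite !exprS.
ring.
Qed.
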